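(* Let $R$ be a ring with unity and involution $*$, and let $a,b,c\in R$. The following statements are equivalent. (1) $a$ is left dual $(b,c)$-core invertible. (2) $R=(cab)^*R\oplus r(b)$. (3) $R=(cab)^*R+r(b)$.
   Context: An element $a\in R$ is called left dual $(b,c)$-core invertible if there exists $x\in Rc$ such that $bxab=b$ and $(xab)^*=xab$. For $b\in R$, $r(b)=\{s\in R: bs=0\}$ is the right annihilator of $b$. *)

(* Defs.v *)
From HB Require Import structures.
From mathcomp Require Import all_boot all_order all_algebra.
Set Implicit Arguments. Unset Strict Implicit. Unset Printing Implicit Defensive.
Import GRing.Theory.
Local Open Scope ring_scope.

Definition involution (R : pzRingType) (star : R -> R) : Prop :=
  (forall x y, star (x + y) = star x + star y) /\
  (forall x y, star (x * y) = star y * star x) /\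
  (forall x, star (star x) = x).

Definition left_dual_bc_core_invertible (R : pzRingType) (star : R -> R)
  (a b c : R) : Prop :=
  exists x : R, (exists y : R, x = y * c) /\ b * x * a * b = b /\
    star (x * a * b) = x * a * b.

Definition rann (R : pzRingType) (b : R) : R -> Prop := fun s => b * s = 0.

Definition rideal (R : pzRingType) (u : R) : R -> Prop :=
  fun s => exists t : R, s = u * t.

Definition sum_whole (R : pzRingType) (A B : R -> Prop) : Prop :=
  forall r : R, exists s t : R, A s /\ B t /\ r = s + t.

Definition dsum_whole (R : pzRingType) (A B : R -> Prop) : Prop :=
  sum_whole A B /\ (forall z : R, A z -> B z -> z = 0).

(* Main.v *)
Require Import Defs.
From mathcomp Require Import all_boot all_order all_algebra.
Local Open Scope ring_scope.
Import GRing.Theory.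

Lemma core_dsum (R : pzRingType) (star : R -> R) (a b c : R) :
  involution star ->
  left_dual_bc_core_invertible star a b c ->
  dsum_whole (rideal (star (c * a * b))) (rann b).
Proof.
move=> [_ [sM sK]] [x [[y ->] [Hb Hp]]]; rewrite !mulrA in Hb Hp.
set p := y * c * a * b in Hp *.
have pq : p = y * (c * a * b) by rewrite /p !mulrA.
have pb : p * star b = star b.
  by rewrite -{1}Hp -sM /p !mulrA Hb.
split.
- move=> r; exists (p * r), (r - p * r); split; [|split].
  + exists (star y * r); rewrite -{1}Hp pq sM mulrA //.
  + by rewrite /rann mulrBr /p !mulrA Hb subrr.
  + by rewrite addrC subrK.
- move=> z [t ->] Hz.
  have e : star (c * a * b) = star b * (star a * star c).
    by rewrite sM sM.
  have -> : star (c * a * b) * t = p * (star (c * a * b) * t).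
    by rewrite e !mulrA pb.
  by rewrite /rann in Hz; rewrite /p -(mulrA _ b) Hz mulr0.
Qed.

Lemma sum_core (R : pzRingType) (star : R -> R) (a b c : R) :
  involution star ->
  sum_whole (rideal (star (c * a * b))) (rann b) ->
  left_dual_bc_core_invertible star a b c.
Proof.
move=> [_ [sM sK]] /(_ 1) [u [s [[t ->] [Hs H1]]]].
set e := star (c * a * b) * t.
have be : b * e = b.
  by rewrite -{2}(mulr1 b) H1 mulrDr Hs addr0.
have eb : star e * star b = star b by rewrite -sM be.
have ee : star e * e = e.
  have eq : e = star b * (star a * star c * t) by rewrite /e sM sM !mulrA.
  by rewrite {2}eq mulrA eb -eq.
have es : star e = e by rewrite -ee sM sK ee.
exists (star t * c); split; first by exists (star t).
have xe : star t * c * a * b = star e by rewrite /e sM sK !mulrA.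
split; last by rewrite xe es.
by rewrite !mulrA -(mulrA b) -(mulrA b) -(mulrA b) xe es be.
Qed.

Theorem theorem2p8 (R : pzRingType) (star : R -> R) (a b c : R) :
  involution star ->
  [/\ (left_dual_bc_core_invertible star a b c <->
         dsum_whole (rideal (star (c * a * b))) (rann b)),
      (dsum_whole (rideal (star (c * a * b))) (rann b) <->
         sum_whole (rideal (star (c * a * b))) (rann b)) &
      (left_dual_bc_core_invertible star a b c <->
         sum_whole (rideal (star (c * a * b))) (rann b))].
Proof.
move=> Hi.
have A := @core_dsum _ _ a b c Hi; have B := @sum_core _ _ a b c Hi.
split; split => H.
- exact: A.
- by apply: B; case: H.
- by case: H.
- exact: A (B H).
- by case: (A H).
- exact: B.
Qed.
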